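(* Let $G(\mathcal V,\mathcal E)$ be a finite simple directed graph and $f\ge 0$ an integer. Suppose that for every partition $A,B,F$ of $\mathcal V$ with $A,B$ non-empty and $|F|\le f$, either $A \Rightarrow_{\mathcal V - F} B$ or $B \Rightarrow_{\mathcal V - F} A$. Then for every partition $L,C,R,F$ of $\mathcal V$ (with $C$ or $F$ possibly empty) such that $L,R$ are non-empty and $|F|\le f$, either $L\cup C\rightarrow R$ or $R\cup C\rightarrow L$.
   Context: For disjoint sets $X,Y\subseteq\mathcal V$ with $Y$ non-empty, $X\rightarrow Y$ means that $X$ contains at least $f+1$ distinct nodes $i$ such that $(i,j)\in\mathcal E$ for some $j\in Y$. An $(X,y)$-path is a directed path from some node of $X$ to the node $y\notin X$; it excludes $F$ if it contains no node of $F$; $(X,y)$-paths are disjoint if they pairwise share only $y$. For pairwise disjoint $X,Y,F$ with $|F|\le f$, $X \Rightarrow_{\mathcal V - F} Y$ means: $Y=\emptyset$, or every $y\in Y$ has at least $f+1$ pairwise disjoint $(X,y)$-paths excluding $F$. *)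

(* Defs.v *)
(* Finite simple directed graph: vertex type T : finType,
   edge relation e : rel T (irreflexive: no self-loops; a relation has no
   multi-edges). *)
From mathcomp Require Import all_boot.
Set Implicit Arguments. Unset Strict Implicit. Unset Printing Implicit Defensive.

Section Defs.
Variables (T : finType) (e : rel T) (f : nat).

Definition arrow (X Y : {set T}) : bool :=
  f.+1 <= #|[set i in X | [exists j in Y, e i j]]|.

Definition XY_path (X : {set T}) (y : T) (p : seq T) : Prop :=
  [/\ y \notin X, uniq p & (exists x, exists q, p = x :: q /\ x \in X /\ path e x q /\ last x q = y)].

Definition excludes (F : {set T}) (p : seq T) : Prop :=
  forall v, v \in p -> v \notin F.

Definition reach (X Y F : {set T}) : Prop :=
  Y = set0 \/
  forall y, y \in Y ->
    exists P : 'I_f.+1 -> seq T,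
      (forall i, XY_path X y (P i) /\ excludes F (P i)) /\
      (forall i j, i != j -> forall v, v \in P i -> v \in P j -> v = y).

End Defs.

(* Main.v *)
Require Import Defs.
From mathcomp Require Import all_boot.

Lemma cross (T : finType) (e : rel T) (S : {set T}) q : forall x,
  x \notin S -> last x q \in S -> path e x q ->
  exists i j, [/\ i \in x :: q, i \notin S, j \in S & e i j].
Proof.
elim: q => [|y q IH] x /= xS.
  by rewrite (negbTE xS).
move=> lS /andP [exy pq].
case yS: (y \in S).
  by exists x, y; rewrite inE eqxx.
have [i [j [H1 H2 H3 H4]]] := IH y (negbT yS) lS pq.
by exists i, j; split=> //; rewrite inE H1 orbT.
Qed.

Lemma key (T : finType) (e : rel T) (f : nat) (X S Z F : {set T}) y
  (P : 'I_f.+1 -> seq T) :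
  y \in S -> [disjoint X & S] ->
  (forall v, v \notin S -> v \notin F -> v \in Z) ->
  (forall i, XY_path e X y (P i) /\ excludes F (P i)) ->
  (forall i j, i != j -> forall v, v \in P i -> v \in P j -> v = y) ->
  arrow e f Z S.
Proof.
move=> yS dXS HZ HP Hdis.
pose g a := odflt y [pick i | (i \in P a) && (i \notin S) &&
                         [exists j in S, e i j]].
have gP : forall a, [&& g a \in P a, g a \notin S & [exists j in S, e (g a) j]].
  move=> a; rewrite /g; case: pickP => [i /= /andP [/andP [-> ->] ->] //|H].
  exfalso; have [[_ _ [x [q [Pq [xX [pq lq]]]]]] _] := HP a.
  have xS : x \notin S by rewrite (disjointFr dXS xX).
  have [i [j [H1 H2 H3 H4]]] := @cross _ e S q x xS (etrans (congr1 (fun z => z \in S) lq) yS) pq.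
  have := H i; rewrite Pq H1 H2 /=.
  by move/negbT/negP; apply; apply/existsP; exists j; rewrite H3 H4.
have ginj : injective g.
  move=> a b gab; apply/eqP; apply/negPn/negP => nab.
  have /and3P [ga gaS _] := gP a.
  have /and3P [gb _ _] := gP b.
  have := Hdis a b nab (g a) ga; rewrite gab => /(_ gb) gy.
  by move: gaS; rewrite gab gy yS.
rewrite /arrow.
have -> : f.+1 = #|g @: [set: 'I_f.+1]| by rewrite card_imset // cardsT card_ord.
apply: subset_leq_card; apply/subsetP => v /imsetP [a _ ->].
have /and3P [ga gaS gex] := gP a.
rewrite inE gex andbT; apply: HZ => //.
by have [_ /(_ _ ga)] := HP a.
Qed.

Lemma dU (T : finType) (A B C : {set T}) : [disjoint A :|: B & C] = [disjoint A & C] && [disjoint B & C].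
Proof. rewrite -disjointU; apply: eq_disjoint => x; by rewrite !inE. Qed.

Theorem lemma7 (T : finType) (e : rel T) (f : nat) :
  irreflexive e ->
  (forall A B F : {set T},
      [disjoint A & B] -> [disjoint A & F] -> [disjoint B & F] ->
      A :|: B :|: F = [set: T] ->
      A != set0 -> B != set0 -> #|F| <= f ->
      reach e f A B F \/ reach e f B A F) ->
  forall L C R F : {set T},
    [disjoint L & C] -> [disjoint L & R] -> [disjoint L & F] ->
    [disjoint C & R] -> [disjoint C & F] -> [disjoint R & F] ->
    L :|: C :|: R :|: F = [set: T] ->
    L != set0 -> R != set0 -> #|F| <= f ->
    arrow e f (L :|: C) R \/ arrow e f (R :|: C) L.
Proof.
move=> _ H L C R F dLC dLR dLF dCR dCF dRF cov L0 R0 Ff.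
have cv : forall v, v \in L :|: C :|: R :|: F by move=> v; rewrite cov inE.
have d1 : [disjoint L :|: C & R] by rewrite dU dLR dCR.
have d2 : [disjoint L :|: C & F] by rewrite dU dLF dCF.
have A0 : L :|: C != set0.
  by move: L0; apply: contra; rewrite setU_eq0 => /andP [].
case: (H _ _ _ d1 d2 dRF cov A0 R0 Ff) => [[E|HR]|[E|HR]].
- by rewrite E eqxx in R0.
- left; have [y yR] := set0Pn _ R0.
  have [P [HP Hd]] := HR y yR.
  apply: (@key _ _ _ _ _ _ F y P yR d1 _ HP Hd) => v vS vF.
  by move: (cv v); rewrite !inE (negbTE vS) (negbTE vF) !orbF.
- by rewrite E eqxx in A0.
- right; have [y yL] := set0Pn _ L0.
  have yLC : y \in L :|: C by rewrite inE yL.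
  have [P [HP Hd]] := HR y yLC.
  apply: (@key _ _ _ R L _ F y P yL) => //.
  + by rewrite disjoint_sym.
  + move=> v vS vF; move: (cv v); rewrite !inE (negbTE vS) (negbTE vF) /=.
    by rewrite orbF orbC.
Qed.
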